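(* Let $n\ge2$, $\omega\in\mathbb{R}^n$, $k\in\mathbb{R}_{>0}^n$ satisfy (IC1) $\sum_\mu\omega_\mu=0$, (IC2) $\omega\ne0$, (IC3) $\left|\frac{\omega_1}{k_1}\right|\le\cdots\le\left|\frac{\omega_n}{k_n}\right|$, and (IC4) $k_1\ge k_2\ge\cdots\ge k_n$. For $\sigma\in\{-1,+1\}^n$ let $f_\sigma(R)=-R+\frac1n\sum_{\mu=1}^n\sigma_\mu\sqrt{k_\mu^2R-\omega_\mu^2}$. Let $\sigma\in\{-1,+1\}^n$ and indices $\mu<\nu$ with $\sigma_\mu=+1$, $\sigma_\nu=-1$, and let $\sigma'$ agree with $\sigma$ except that $\sigma'_\mu=-1$ and $\sigma'_\nu=+1$. If $f_\sigma$ has no positive roots, then $f_{\sigma'}$ has no positive roots.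
   Context: Square roots are nonnegative real square roots; a positive root of $f_\sigma$ is a real $R>0$ with $k_\mu^2R-\omega_\mu^2\ge0$ for all $\mu$ and $f_\sigma(R)=0$. *)

(* Defs.v *)
From HB Require Import structures.
From mathcomp Require Import all_boot all_order all_algebra.
From mathcomp Require Import reals.
Set Implicit Arguments. Unset Strict Implicit. Unset Printing Implicit Defensive.
Import Order.TTheory GRing.Theory Num.Theory.
Local Open Scope ring_scope.

(* A sign vector sigma in {-1,+1}^n is encoded as 'I_n -> bool,
   true meaning +1 and false meaning -1. *)
Definition sgnb {R : realType} (b : bool) : R := if b then 1 else -1.

Definition fsig {R : realType} (n : nat) (omega k : 'I_n -> R)
  (sigma : 'I_n -> bool) (x : R) : R :=
  - x + n%:R^-1 * \sum_(i < n) sgnb (sigma i) * Num.sqrt (k i ^+ 2 * x - omega i ^+ 2).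

Definition pos_root {R : realType} (n : nat) (omega k : 'I_n -> R)
  (sigma : 'I_n -> bool) (x : R) : Prop :=
  0 < x /\ (forall i, 0 <= k i ^+ 2 * x - omega i ^+ 2) /\ fsig omega k sigma x = 0.

Definition swap_sig (n : nat) (sigma : 'I_n -> bool) (mu nu : 'I_n) : 'I_n -> bool :=
  fun i => if i == mu then false else if i == nu then true else sigma i.

(* Main.v *)
Require Import Defs.
From HB Require Import structures.
From mathcomp Require Import all_boot all_order all_algebra.
From mathcomp Require Import reals.
From mathcomp Require Import classical_sets topology normedtype realfun.
From mathcomp Require Import ring lra.
Import Order.TTheory GRing.Theory Num.Theory.
Import numFieldNormedType.Exports.
Local Open Scope ring_scope.

Lemma fsig_cont (R : realType) (n : nat) (omega k : 'I_n -> R) s :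
  continuous (fsig omega k s).
Proof.
have H : continuous (fun y : R => \sum_(i < n) sgnb (s i) * Num.sqrt (k i ^+ 2 * y - omega i ^+ 2)).
  apply: continuous_big; first exact: add_continuous.
  move=> i _ y; apply: cvgM; first exact: cvg_cst.
  apply: (continuous_comp (f := fun y : R => k i ^+ 2 * y - omega i ^+ 2)); last exact: sqrt_continuous.
  apply: cvgD; last exact: cvg_cst.
  apply: cvgM; first exact: cvg_cst.
  exact: cvg_id.
move=> x; rewrite /fsig.
apply: cvgD; first by apply: cvgN; exact: cvg_id.
apply: cvgM; first exact: cvg_cst.
exact: H.
Qed.

Lemma fsig_diff (R : realType) (n : nat) (omega k : 'I_n -> R) sigma (mu nu : 'I_n) x :
  mu != nu -> sigma mu = true -> sigma nu = false ->
  fsig omega k sigma x = fsig omega k (swap_sig sigma mu nu) x +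
    n%:R^-1 * (2 * Num.sqrt (k mu ^+ 2 * x - omega mu ^+ 2)
               - 2 * Num.sqrt (k nu ^+ 2 * x - omega nu ^+ 2)).
Proof.
move=> hne hsmu hsnu; rewrite /fsig -addrA -mulrDr; congr (_ + _ * _).
set q := fun i => Num.sqrt (k i ^+ 2 * x - omega i ^+ 2).
rewrite (eq_bigr (fun i => sgnb (swap_sig sigma mu nu i) * q i
   + ((if i == mu then 2 * q i else 0) - (if i == nu then 2 * q i else 0)))); last first.
  move=> i _; rewrite /swap_sig /sgnb /q.
  case: eqP => [->|_]; first by rewrite (negbTE hne) hsmu; ring.
  case: eqP => [->|_]; first by rewrite hsnu; ring.
  by case: (sigma i); ring.
rewrite big_split /= big_split /= sumrN -!big_mkcond /= !big_pred1_eq.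
by [].
Qed.

Theorem lemma4 (R : realType) (n : nat) (omega k : 'I_n -> R)
  (hn : (2 <= n)%N)
  (hk : forall i, 0 < k i)
  (IC1 : \sum_(i < n) omega i = 0)
  (IC2 : exists i, omega i != 0)
  (IC3 : forall i j : 'I_n, (i <= j)%N -> `|omega i / k i| <= `|omega j / k j|)
  (IC4 : forall i j : 'I_n, (i <= j)%N -> k j <= k i)
  (sigma : 'I_n -> bool) (mu nu : 'I_n)
  (hmunu : (mu < nu)%N) (hsmu : sigma mu = true) (hsnu : sigma nu = false) :
  (~ exists x : R, pos_root omega k sigma x) ->
  ~ exists x : R, pos_root omega k (swap_sig sigma mu nu) x.
Proof.
move=> Hno [x0 [x0pos [hrad hf']]]; apply: Hno.
have hne : mu != nu by apply/eqP => e; move: hmunu; rewrite e ltnn.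
have n0 : 0 < n%:R :> R by rewrite ltr0n; apply: leq_trans hn.
have ni0 : 0 <= n%:R^-1 :> R by rewrite invr_ge0 ltW.
set F := fsig omega k sigma.
have F0 : 0 <= F x0.
  rewrite /F (@fsig_diff R n omega k sigma mu nu x0 hne hsmu hsnu) hf' add0r.
  apply: mulr_ge0 => //; rewrite subr_ge0 ler_pM2l // ler_sqrt //.
  set a := omega mu / k mu; set b := omega nu / k nu.
  have ea : omega mu = a * k mu by rewrite /a divfK // gt_eqF.
  have eb : omega nu = b * k nu by rewrite /b divfK // gt_eqF.
  have hab : a ^+ 2 <= b ^+ 2.
    rewrite -(real_normK (num_real a)) -(real_normK (num_real b)).
    by rewrite lerXn2r ?nnegrE ?normr_ge0 // IC3 // ltnW.
  have hkk : k nu <= k mu by apply: IC4; apply: ltnW.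
  have hrn := hrad nu; rewrite eb in hrn.
  have hxb : 0 <= x0 - b ^+ 2.
    have : 0 <= k nu ^+ 2 * (x0 - b ^+ 2).
      by have -> : k nu ^+ 2 * (x0 - b ^+ 2) = k nu ^+ 2 * x0 - (b * k nu) ^+ 2 by ring.
    by rewrite pmulr_rge0 // exprn_gt0.
  have hkn := hk nu; have hkm := hk mu.
  rewrite ea eb.
  have -> : k nu ^+ 2 * x0 - (b * k nu) ^+ 2 = k nu ^+ 2 * (x0 - b ^+ 2) by ring.
  have -> : k mu ^+ 2 * x0 - (a * k mu) ^+ 2 = k mu ^+ 2 * (x0 - a ^+ 2) by ring.
  have h1 : k mu ^+ 2 * (x0 - b ^+ 2) <= k mu ^+ 2 * (x0 - a ^+ 2).
    by rewrite ler_pM2l ?exprn_gt0 // lerD2l lerN2.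
  have h2 : k nu ^+ 2 * (x0 - b ^+ 2) <= k mu ^+ 2 * (x0 - b ^+ 2).
    by apply: ler_wpM2r => //; rewrite !expr2; apply: ler_pM => //; exact: ltW.
  exact: le_trans h2 h1.
set S := n%:R^-1 * \sum_(i < n) k i.
set b := Num.max x0 (S ^+ 2).
have hx0b : x0 <= b by rewrite le_max lexx.
have hb0 : 0 <= b by apply: le_trans hx0b; apply: ltW.
have hsb : S <= Num.sqrt b.
  apply: le_trans (ler_norm S) _.
  by rewrite -sqrtr_sqr ler_sqrt // le_max lexx orbT.
have hsb0 := sqrtr_ge0 b.
have Fb : F b <= 0.
  rewrite /F /fsig.
  have hs : \sum_(i < n) sgnb (sigma i) * Num.sqrt (k i ^+ 2 * b - omega i ^+ 2)
            <= \sum_(i < n) k i * Num.sqrt b.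
    apply: ler_sum => i _.
    have hq := sqrtr_ge0 (k i ^+ 2 * b - omega i ^+ 2).
    apply: (@le_trans _ _ (Num.sqrt (k i ^+ 2 * b - omega i ^+ 2))).
      by case: (sigma i); rewrite /sgnb ?mul1r ?mulN1r //; lra.
    apply: (@le_trans _ _ (Num.sqrt (k i ^+ 2 * b))).
      rewrite ler_sqrt; last by apply: mulr_ge0 => //; apply: sqr_ge0.
      by have := sqr_ge0 (omega i); lra.
    by rewrite sqrtrM ?sqr_ge0 // sqrtr_sqr gtr0_norm.
  rewrite -mulr_suml in hs.
  have h1 : n%:R^-1 * \sum_(i < n) sgnb (sigma i) * Num.sqrt (k i ^+ 2 * b - omega i ^+ 2)
            <= S * Num.sqrt b by rewrite /S -mulrA; apply: ler_wpM2l.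
  have h2 : S * Num.sqrt b <= Num.sqrt b * Num.sqrt b by apply: ler_wpM2r.
  have h3 : Num.sqrt b * Num.sqrt b = b by rewrite -expr2 sqr_sqrtr.
  lra.
have [c hc Fc] := @IVT R F x0 b 0 hx0b (continuous_subspaceT (fun x => @fsig_cont R n omega k sigma x))
  ltac:(by rewrite ge_min le_max F0 Fb orbT).
exists c; move: hc; rewrite in_itv /= => /andP [h1 h2].
split; first exact: lt_le_trans h1.
split => // i.
apply: le_trans (hrad i) _; rewrite lerD2r ler_wpM2l ?sqr_ge0 //.
Qed.
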